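(* Let $r\ge 2$, $d\ge 1$. Let $\Delta\subset\mathbb{R}^d$ be a regular simplex with vertices $v_1,\ldots,v_{d+1}$ and centre $c$, and let $B$ be the closed Euclidean unit ball centred at the origin. Then for all sufficiently small $\varepsilon>0$ the following holds. For each $h\in[d+1]$ let $U_h\subset v_h+\varepsilon B$ be a set of $r-1$ points, and let $A=\{c\}\cup\bigcup_{h=1}^{d+1}U_h$ (so $|A|=(r-1)(d+1)+1$), where the points are chosen so that the coordinates of the points of $A$ are algebraically independent. Then there is no proper partition $\{A_1,\ldots,A_r\}$ of $A$ for which the solution $(z,\alpha)$ of \[ z=\sum_{x\in A_j}\alpha(x)\,x \quad\text{and}\quad 1=\sum_{x\in A_j}\alpha(x)\qquad\text{for all } j\in[r] \] satisfies $\alpha(c)<0$ and $\alpha(x)>0$ for all $x\in A\setminus\{c\}$.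
   Context: A partition $\{A_1,\ldots,A_r\}$ of $A$ into $r$ parts is called proper if $1\le |A_j|\le d+1$ for every $j$. Note that here $M=\{c\}$ does not satisfy $\operatorname{conv}M\cap\operatorname{conv}(A\setminus M)=\emptyset$. *)

(* Defs.v *)
From HB Require Import structures.
From mathcomp Require Import all_boot all_order all_algebra.
Set Implicit Arguments. Unset Strict Implicit. Unset Printing Implicit Defensive.
Import Order.TTheory GRing.Theory Num.Theory.
Local Open Scope ring_scope.

Definition sqdist (R : realFieldType) (d : nat) (x y : 'rV[R]_d) : R :=
  \sum_(i < d) (x 0 i - y 0 i) ^+ 2.

Definition regular_simplex (R : realFieldType) (d : nat) (v : 'I_d.+1 -> 'rV[R]_d) : Prop :=
  exists s : R, 0 < s /\ forall i j : 'I_d.+1, i != j -> sqdist (v i) (v j) = s.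

Definition simplex_centre (R : realFieldType) (d : nat) (v : 'I_d.+1 -> 'rV[R]_d) : 'rV[R]_d :=
  (d.+1%:R)^-1 *: \sum_(h < d.+1) v h.

(* Algebraic independence over Q of a finite family of numbers x : V -> R:
   no nonzero polynomial with integer (equivalently rational) coefficients
   vanishes at x.  A polynomial in the variables V with degree < D in each
   variable is given by its coefficient function on exponent vectors. *)
Definition alg_indep (R : realFieldType) (V : finType) (x : V -> R) : Prop :=
  forall (D : nat) (f : {ffun {ffun V -> 'I_D} -> int}),
    (exists e, f e != 0) ->
    \sum_(e : {ffun V -> 'I_D}) (f e)%:~R * \prod_(w : V) x w ^+ (e w) != 0.

(* labels of the points of A : None is c, Some (h,k) is the k-th point of U_h *)
Definition Alabel (d r : nat) : finType := option ('I_d.+1 * 'I_r.-1).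

Definition Apoint (R : realFieldType) (d r : nat) (c : 'rV[R]_d)
  (U : 'I_d.+1 -> 'I_r.-1 -> 'rV[R]_d) (t : Alabel d r) : 'rV[R]_d :=
  match t with None => c | Some (h, k) => U h k end.

Definition Acoords (R : realFieldType) (d r : nat) (c : 'rV[R]_d)
  (U : 'I_d.+1 -> 'I_r.-1 -> 'rV[R]_d) (w : Alabel d r * 'I_d) : R :=
  Apoint c U w.1 0 w.2.

Definition proper_partition (d r : nat) (P : {set {set Alabel d r}}) : Prop :=
  partition P [set: Alabel d r] /\ #|P| = r /\
  forall B, B \in P -> (1 <= #|B| <= d.+1)%N.

(* Main.v *)
Require Import Defs.
From HB Require Import structures.
From mathcomp Require Import all_boot all_order all_algebra.
From mathcomp Require Import ring lra.
Import Order.TTheory GRing.Theory Num.Theory.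
Local Open Scope ring_scope.
Set Implicit Arguments. Unset Strict Implicit.


Section Dot.
Variables (R : realFieldType) (d : nat).
Definition dot (x y : 'rV[R]_d) : R := \sum_(i < d) x 0 i * y 0 i.

Lemma dotC x y : dot x y = dot y x.
Proof. by apply: eq_bigr => i _; rewrite mulrC. Qed.
Lemma dotDl x y z : dot (x + y) z = dot x z + dot y z.
Proof. by rewrite /dot -big_split; apply: eq_bigr => i _; rewrite mxE mulrDl. Qed.
Lemma dotBl x y z : dot (x - y) z = dot x z - dot y z.
Proof. by rewrite /dot -sumrB; apply: eq_bigr => i _; rewrite !mxE mulrBl. Qed.
Lemma dotBr x y z : dot z (x - y) = dot z x - dot z y.
Proof. by rewrite !(dotC z) dotBl. Qed.
Lemma dotZl a x y : dot (a *: x) y = a * dot x y.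
Proof. by rewrite /dot mulr_sumr; apply: eq_bigr => i _; rewrite mxE mulrA. Qed.
Lemma dot0r x : dot x 0 = 0.
Proof. by rewrite /dot big1 // => i _; rewrite mxE mulr0. Qed.
Lemma dot_suml (I : finType) (P : pred I) (f : I -> 'rV[R]_d) y :
  dot (\sum_(t | P t) f t) y = \sum_(t | P t) dot (f t) y.
Proof.
rewrite /dot exchange_big /=; apply: eq_bigr => i _.
by rewrite summxE mulr_suml.
Qed.
Lemma dot_sumr (I : finType) (P : pred I) (f : I -> 'rV[R]_d) y :
  dot y (\sum_(t | P t) f t) = \sum_(t | P t) dot y (f t).
Proof. by rewrite dotC dot_suml; apply: eq_bigr => t _; rewrite dotC. Qed.
Lemma sqdistE x y : sqdist x y = dot (x - y) (x - y).
Proof. by apply: eq_bigr => i _; rewrite !mxE expr2. Qed.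
Lemma dot_ge0 x : 0 <= dot x x.
Proof. by apply: sumr_ge0 => i _; rewrite -expr2 sqr_ge0. Qed.
Lemma dot_amgm (w a : 'rV[R]_d) (t : R) :
  2 * t * dot w a <= dot w w + t ^+ 2 * dot a a.
Proof.
have := dot_ge0 (w - t *: a).
rewrite !dotBl !dotBr. rewrite !dotZl (dotC w (t *: a)) dotZl (dotC a w).
move=> h; rewrite -subr_ge0; apply: le_trans h _; rewrite le_eqVlt; apply/orP; left.
apply/eqP. rewrite expr2 (dotC a (t *: a)) dotZl. ring.
Qed.
Lemma dot_sqB x y : dot (x - y) (x - y) = dot x x - 2 * dot x y + dot y y.
Proof. rewrite !dotBl !dotBr (dotC y x); ring. Qed.
End Dot.


Lemma simplex_facts (R : realFieldType) (d : nat) (v : 'I_d.+1 -> 'rV[R]_d) (s : R)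
  (hv : forall i j, i != j -> sqdist (v i) (v j) = s) :
  let c := simplex_centre v in
  [/\ \sum_h (v h - c) = 0,
      forall h, 2 * d.+1%:R * dot (v h - c) (v h - c) = d%:R * s &
      forall h k, h != k -> 2 * d.+1%:R * dot (v h - c) (v k - c) = - s].
Proof.
move=> c; set a := fun h => v h - c.
have n0 : (d.+1%:R : R) != 0 by rewrite pnatr_eq0.
have sa : \sum_h a h = 0.
  rewrite /a sumrB sumr_const card_ord -scaler_nat /c /simplex_centre scalerA.
  by rewrite mulfV // scale1r subrr.
have Eh : forall h, d.+1%:R * dot (a h) (a h) + \sum_k dot (a k) (a k) = d%:R * s.
  move=> h.
  have -> : d%:R * s = \sum_k sqdist (v h) (v k).
    rewrite (bigD1 h) //= sqdistE subrr dot0r add0r.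
    rewrite (eq_bigr (fun _ => s)); last by move=> k hk; rewrite hv // eq_sym.
    rewrite sumr_const mulr_natl; congr (_ *+ _).
    by rewrite cardC1 card_ord.
  have ex : forall k, sqdist (v h) (v k) = dot (a h) (a h) - 2 * dot (a h) (a k) + dot (a k) (a k).
    move=> k; rewrite sqdistE.
    have -> : v h - v k = a h - a k by rewrite /a opprB addrA subrK.
    by rewrite dot_sqB.
  rewrite (eq_bigr _ (fun k _ => ex k)).
  rewrite big_split sumrB /= sumr_const card_ord -mulr_sumr -dot_sumr sa dot0r mulr_natl.
  by rewrite mulr0 subr0.
set Q := \sum_k dot (a k) (a k) in Eh.
have EQ : 2 * Q = d%:R * s.
  have : \sum_(h < d.+1) (d.+1%:R * dot (a h) (a h) + Q) = \sum_(h < d.+1) (d%:R * s).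
    by apply: eq_bigr => h _; exact: Eh.
  rewrite big_split /= -mulr_sumr !sumr_const card_ord -(mulr_natl Q) -(mulr_natl (d%:R * s)) -/Q.
  by move=> e; apply: (mulfI n0); rewrite -e; ring.
have e1 : forall h, d.+1%:R * dot (a h) (a h) = d%:R * s - Q by move=> h; rewrite -(Eh h) addrK.
split => //.
  move=> h; change (2 * d.+1%:R * dot (a h) (a h) = d%:R * s).
  by rewrite -mulrA e1 mulrBr -EQ; ring.
move=> h k hk; change (2 * d.+1%:R * dot (a h) (a k) = - s).
have e3 : s = dot (a h) (a h) - 2 * dot (a h) (a k) + dot (a k) (a k).
  rewrite -(hv h k hk) sqdistE (_ : v h - v k = a h - a k) ?dot_sqB //.
  by rewrite /a opprB addrA subrK.
have nd : (d.+1%:R : R) = d%:R + 1 by rewrite natr1.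
have -> : 2 * d.+1%:R * dot (a h) (a k) =
   d.+1%:R * dot (a h) (a h) + d.+1%:R * dot (a k) (a k) - d.+1%:R * s.
  rewrite [in RHS]e3; ring.
by rewrite !e1 nd mulrDl mul1r -EQ; ring.
Qed.


Lemma sum_neg (R : realFieldType) (I : finType) (B : {set I}) (F : I -> R) x0 :
  x0 \in B -> (forall t, t \in B -> F t <= 0) -> F x0 < 0 -> \sum_(t in B) F t < 0.
Proof.
move=> hx hF hx0; rewrite (bigD1 x0) //=.
have : \sum_(t in B | t != x0) F t <= 0 by apply: sumr_le0 => t /andP [ht _]; exact: hF.
lra.
Qed.

Lemma key_ineq (R : realFieldType) (n s rho eps eps0 X Y W : R) :
  0 < n -> 0 < s -> 0 <= rho -> 0 < eps -> eps <= eps0 ->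
  eps0 * (2 * n * (1 + rho)) = s -> 2 * n * Y = - s ->
  2 * eps * X <= W + eps ^+ 2 * rho -> W <= eps ^+ 2 -> X + Y < 0.
Proof.
move=> n0 s0 r0 e0 ee e0d eY hX hW.
have h1 : 2 * X <= eps * (1 + rho).
  rewrite -(ler_pM2l e0); apply: le_trans (_ : W + eps ^+ 2 * rho <= _).
    by rewrite mulrA [eps * 2]mulrC.
  rewrite expr2; lra.
have h2 : eps * (1 + rho) <= eps0 * (1 + rho) by rewrite ler_wpM2r //; lra.
have h3 : 2 * n * (2 * X) <= s.
  have -> : s = 2 * n * (eps0 * (1 + rho)) by rewrite -e0d; ring.
  rewrite ler_wpM2l //; first lra.
  exact: le_trans h1 h2.
have h4 : 2 * n * (2 * (X + Y)) < 0.
  have -> : 2 * n * (2 * (X + Y)) = 2 * n * (2 * X) + 2 * (2 * n * Y) by ring.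
  rewrite eY; lra.
have hn : 0 < 2 * n * 2 by lra.
move: h4; rewrite mulrA => h4.
have : 0 < 2 * n * 2 * (- (X + Y)) by lra.
rewrite pmulr_rgt0 //; lra.
Qed.

Lemma sum_negP (R : realFieldType) (I : finType) (P : pred I) (F : I -> R) x0 :
  P x0 -> (forall t, P t -> F t <= 0) -> F x0 < 0 -> \sum_(t | P t) F t < 0.
Proof.
move=> hx hF hx0; rewrite (bigD1 x0) //=.
have : \sum_(t | P t && (t != x0)) F t <= 0 by apply: sumr_le0 => t /andP [ht _]; exact: hF.
lra.
Qed.


Unset Implicit Arguments.
Theorem mainTheorem7 (R : realFieldType) (r d : nat) (hr : (2 <= r)%N) (hd : (1 <= d)%N)
  (v : 'I_d.+1 -> 'rV[R]_d) (hreg : regular_simplex v) :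
  exists eps0 : R, 0 < eps0 /\
  forall eps : R, 0 < eps -> eps <= eps0 ->
  forall U : 'I_d.+1 -> 'I_r.-1 -> 'rV[R]_d,
    (forall h k, sqdist (U h k) (v h) <= eps ^+ 2) ->
    alg_indep (Acoords (simplex_centre v) U) ->
    ~ exists (P : {set {set Alabel d r}}) (z : 'rV[R]_d) (alpha : Alabel d r -> R),
        [/\ proper_partition P,
            forall B, B \in P ->
              z = \sum_(t in B) alpha t *: Apoint (simplex_centre v) U t /\
              \sum_(t in B) alpha t = 1,
            alpha None < 0
          & forall h k, 0 < alpha (Some (h, k))].
Proof.
case: hreg => s [s0 hv].
have [sa Ed Eo] := @simplex_facts R d v s hv.
set c := simplex_centre v in sa Ed Eo *.
set n : R := d.+1%:R.
have n0 : 0 < n by rewrite /n ltr0n.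
set rho : R := d%:R * s / (2 * n).
have rho0 : 0 <= rho.
  apply: divr_ge0; [apply: mulr_ge0; [exact: ler0n | exact: ltW] | lra].
have Erho : forall h, dot (v h - c) (v h - c) = rho.
  move=> h; rewrite /rho -(Ed h); field; lra.
have nE : n = d.+1%:R by [].
clearbody rho n.
exists (s / (2 * n * (1 + rho))); split.
  apply: divr_gt0 => //; clear -n0 rho0; apply: mulr_gt0; first exact: mulr_gt0.
  by apply: (lt_le_trans ltr01); rewrite lerDl.
move=> eps e0 ee U hU _ [P [z [alpha [hpp hB hc hpos]]]].
case: hpp => hpart [hcard _].
have neg : forall h0 h k, h != h0 -> dot (U h k - c) (v h0 - c) < 0.
  move=> h0 h k hh.
  have -> : U h k - c = (U h k - v h) + (v h - c) by rewrite addrA subrK.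
  rewrite dotDl.
  apply: (@key_ineq R n s rho eps (s / (2 * n * (1 + rho)))
            _ _ (dot (U h k - v h) (U h k - v h))) => //.
  - by rewrite divfK //; apply/lt0r_neq0/mulr_gt0; lra.
  - by rewrite nE Eo.
  - by rewrite -(Erho h0) dot_amgm.
  - by rewrite -sqdistE.
move: hpart => /and3P [_ htriv h0P].
have dot0l : forall y : 'rV[R]_d, dot 0 y = 0 by move=> y; rewrite dotC dot0r.
have [h0 hz] : exists h0, 0 <= dot (z - c) (v h0 - c).
  case: (boolP [exists h, 0 <= dot (z - c) (v h - c)]) => [/existsP // | /existsPn hall].
  have : \sum_h dot (z - c) (v h - c) < 0.
    apply: (@sum_negP R _ predT _ ord0) => //.
      by move=> t _; rewrite ltW // ltNge hall.
    by rewrite ltNge hall.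
  by rewrite -dot_sumr sa dot0r ltxx.
have hBk : forall B, B \in P -> exists k, Some (h0, k) \in B.
  move=> B hBP; have [hzB hsB] := hB B hBP.
  case: (boolP [exists k, Some (h0,k) \in B]) => [/existsP // | /existsPn hnk]; exfalso.
  have [x0 hx0] : exists x, x \in B.
    by apply/set0Pn; apply: contraNneq h0P => eB; rewrite -eB.
  case: (boolP [exists t in B, t != None]) => [/exists_inP [t0 ht0 nt0] | /exists_inPn hall].
  - have : dot (z - c) (v h0 - c) < 0.
      have -> : dot (z - c) (v h0 - c) =
          \sum_(t in B) alpha t * dot (Apoint c U t - c) (v h0 - c).
        rewrite hzB dotBl dot_suml.
        rewrite -[dot c _]mul1r -hsB mulr_suml -sumrB; apply: eq_bigr => t _.
        by rewrite dotZl dotBl mulrBr.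
      have hterm : forall h k, Some (h, k) \in B ->
          alpha (Some (h, k)) * dot (Apoint c U (Some (h, k)) - c) (v h0 - c) < 0.
        move=> h k hk; rewrite pmulr_rlt0 //=; apply: neg.
        by apply/negP => /eqP eh; move: (hnk k); rewrite -eh hk.
      apply: (@sum_negP R _ _ _ t0) => //.
        move=> [[h k]|] ht /=; first by apply: ltW; apply: hterm.
        by rewrite subrr dot0l mulr0.
      by move: nt0 ht0; case: t0 => [[h k]|] //= _; apply: hterm.
    by rewrite ltNge hz.
  - have : \sum_(t in B) alpha t < 0.
      have hN : forall t, t \in B -> t = None.
        by move=> t ht; move: (hall t ht); rewrite negbK => /eqP.
      apply: (@sum_negP R _ _ _ x0) => //.
        by move=> t ht; rewrite (hN t ht) ltW.
      by rewrite (hN x0 hx0).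
    by rewrite hsB ltr10.
have hr1 : (0 < r.-1)%N by rewrite -subn1 subn_gt0.
pose f := fun B : {set Alabel d r} => odflt (Ordinal hr1) [pick k | Some (h0, k) \in B].
have fP : forall B, B \in P -> Some (h0, f B) \in B.
  move=> B hBP; rewrite /f; case: pickP => [k hk //| hnone].
  by have [k hk] := hBk B hBP; rewrite hnone in hk.
have finj : {in P &, injective f}.
  move=> B1 B2 h1 h2 e.
  by rewrite -(def_pblock htriv h1 (fP B1 h1)) -(def_pblock htriv h2 (fP B2 h2)) e.
have := max_card [set f x | x in P]; rewrite (card_in_imset finj) card_ord hcard.
by rewrite leqNgt ltn_predL (leq_trans _ hr).
Qed.
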